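(* Let $\mathcal T\subseteq\mathbb N$ be a symmetric numerical semigroup with minimal system of generators $a_1<\dots<a_n$. If $2\notin\mathcal T$, then $a_n<F(\mathcal T)$.
   Context: A numerical semigroup is a submonoid $\mathcal T\subseteq\mathbb N$ with finite complement; its Frobenius number is $F(\mathcal T)=\max(\mathbb N\setminus\mathcal T)$; $\mathcal T$ is symmetric if for every $b\in\mathbb N$, $b\in\mathcal T$ or $F(\mathcal T)-b\in\mathcal T$. The minimal system of generators is the unique minimal generating set of $\mathcal T$ as a monoid. *)

(* Defs.v *)
From mathcomp Require Import all_boot.
Set Implicit Arguments. Unset Strict Implicit. Unset Printing Implicit Defensive.

Definition numerical_semigroup (T : nat -> Prop) : Prop :=
  [/\ T 0, (forall x y, T x -> T y -> T (x + y)) &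
      exists N, forall n, N <= n -> T n].

Definition is_frobenius (T : nat -> Prop) (f : nat) : Prop :=
  ~ T f /\ (forall n, ~ T n -> n <= f).

Definition symmetric_wrt (T : nat -> Prop) (f : nat) : Prop :=
  forall b, T b \/ (b <= f /\ T (f - b)).

Inductive generated (G : seq nat) : nat -> Prop :=
  | gen0 : generated G 0
  | genS : forall g x, g \in G -> generated G x -> generated G (g + x).

Definition generates (G : seq nat) (T : nat -> Prop) : Prop :=
  forall x, generated G x <-> T x.

Definition minimal_generators (T : nat -> Prop) (G : seq nat) : Prop :=
  [/\ sorted ltn G, generates G T &
      forall g, g \in G -> ~ generates (rem g G) T].

(* Main.v *)
Require Import Defs.
From mathcomp Require Import all_boot.
From mathcomp Require Import zify.

Lemma gen_add G x y : generated G x -> generated G y -> generated G (x + y).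
Proof.
elim=> [|g x' Hg _ IH] Hy //=.
rewrite -addnA; apply: genS => //; exact: IH.
Qed.

Lemma gen_sub G H x : {subset G <= H} -> generated G x -> generated H x.
Proof.
move=> sGH; elim=> [|g x' Hg _ IH]; first exact: gen0.
apply: genS => //; exact: sGH.
Qed.

Lemma not_decomp (T : nat -> Prop) (G : seq nat) a s t :
  minimal_generators T G -> a \in G -> (forall g, g \in G -> g <= a) ->
  T s -> T t -> 0 < s -> 0 < t -> a = s + t -> False.
Proof.
case=> Hs Hgen Hmin aG Hmax Ts Tt s0 t0 Ea.
have uG : uniq G by apply: (sorted_uniq ltn_trans ltnn).
have inrem g : g \in G -> g != a -> g \in rem a G.
  by move=> gG gna; rewrite (rem_filter _ uG) mem_filter /= gna.
have low x : generated G x -> x < a -> generated (rem a G) x.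
  elim=> [|g x' gG _ IH] lt; first exact: gen0.
  apply: genS; last by apply: IH; lia.
  apply: inrem => //; apply/eqP => ega; lia.
apply: (Hmin a aG) => x; split.
  move=> Hx; apply/Hgen; apply: gen_sub Hx => y; exact: mem_rem.
move/Hgen; elim=> [|g x' gG _ IH]; first exact: gen0.
have [ega|gna] := eqVneq g a.
  rewrite ega {2}Ea -addnA; apply: gen_add.
    by apply: low; [apply/Hgen | lia].
  apply: gen_add => //; by apply: low; [apply/Hgen | lia].
by apply: genS => //; apply: inrem.
Qed.

Lemma path_last_max x s : path ltn x s -> forall g, g \in x :: s -> g <= last x s.
Proof.
elim: s x => [|y s IH] x /=.
  by move=> _ g; rewrite inE => /eqP ->.
move=> /andP [xy Hp] g; rewrite inE => /orP [/eqP ->|gs].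
  have := IH y Hp y (mem_head _ _); lia.
exact: IH.
Qed.

Theorem mainTheorem13 (T : nat -> Prop) (F : nat) (G : seq nat) :
  numerical_semigroup T ->
  is_frobenius T F ->
  symmetric_wrt T F ->
  minimal_generators T G ->
  ~ T 2 ->
  last 0 G < F.
Proof.
move=> [T0 Tadd _] [TF _] Hsym Hmg nT2.
have F0 : 0 < F by case: F TF Hsym => // /(_ T0).
case: G Hmg => [|g0 G'] Hmg; first by [].
set a := last 0 (g0 :: G').
have aG : a \in g0 :: G' by rewrite /a /=; exact: mem_last.
have Hmax : forall g, g \in g0 :: G' -> g <= a.
  case: Hmg => Hs _ _; exact: path_last_max.
have Ta : T a.
  case: Hmg => _ Hgen _; apply/Hgen; rewrite -[a]addn0; apply: genS => //; exact: gen0.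
have nd := fun s t => @not_decomp T _ _ s t Hmg aG Hmax.
rewrite ltnNge; apply/negP => Fa.
have aF : F < a by rewrite ltn_neqAle Fa andbT; apply/eqP => E; apply: TF; rewrite E.
set d := a - F.
have key : forall s, T s -> 0 < s -> s < a -> d <= s /\ T (s - d).
  move=> s Ts s0 sa.
  case: (Hsym (a - s)) => [Tas|[le Tf]].
    by exfalso; apply: (nd s (a - s)) => //; lia.
  split; first lia.
  by have -> : s - d = F - (a - s) by lia.
have T1 : ~ T 1 by move=> T1; apply: nT2; exact: (Tadd 1 1).
have [F1 TF1] : 1 <= F /\ T (F - 1) by case: (Hsym 1).
have [F2 TF2] : 2 <= F /\ T (F - 2) by case: (Hsym 2).
have F3 : 3 <= F by case: F F2 TF1 T1 {TF2 Hsym key TF d F0 F1 aF Fa} => [|[|[|]]] //.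
have dv : forall n s, s < n -> T s -> s < a -> d %| s.
  elim=> [//|n IH] s sn Ts sa.
  case: (posnP s) => [-> //|s0].
  have [ds Tsd] := key s Ts s0 sa.
  have : d %| s - d by apply: IH => //; lia.
  by rewrite dvdn_subl.
have d1 : d = 1.
  have h1 : d %| F - 1 by apply: (dv F) => //; lia.
  have h2 : d %| F - 2 by apply: (dv F) => //; lia.
  have : d %| (F - 1) - (F - 2) by apply: dvdn_sub.
  have -> : (F - 1) - (F - 2) = 1 by lia.
  by rewrite dvdn1 => /eqP.
have down : forall k, k <= F - 3 -> T (F - 1 - k).
  elim=> [|k IH] kle; first by rewrite subn0.
  have [_ ] := key (F - 1 - k) (IH (ltnW kle)) ltac:(lia) ltac:(lia).
  by rewrite d1; have -> : F - 1 - k - 1 = F - 1 - k.+1 by lia.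
apply: nT2; have := down (F - 3) (leqnn _).
by have -> : F - 1 - (F - 3) = 2 by lia.
Qed.
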